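(* Let $G=(N,A)$ be an $s$-$t$ DAG (parallel arcs allowed) and let $uv,xy\in A$. If $uv$ is the immediate $s$-dominator of $xy$, then the immediate $t$-dominator of $uv$ $t$-dominates $xy$.
   Context: An $s$-$t$ DAG is a directed acyclic multigraph with a unique source $s$ and a unique sink $t$ such that every node is reachable from $s$ and every node reaches $t$. An arc $ab$ $s$-dominates an arc $cd$ if $ab=cd$ or every $s$-$c$ path contains $ab$; $ab$ $t$-dominates $cd$ if $ab=cd$ or every $d$-$t$ path contains $ab$; strict domination additionally requires $ab\neq cd$. The immediate $s$-dominator of an arc $cd$ is the strict $s$-dominator of $cd$ that is $s$-dominated by all strict $s$-dominators of $cd$; immediate $t$-dominators are defined symmetrically. The arc dominator trees have an abstract root (corresponding to $s$, resp. $t$): if an arc has no strict $t$-dominator, its immediate $t$-dominator is this abstract root, which by convention $t$-dominates every arc. *)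

(* Defs.v *)
From mathcomp Require Import all_boot.
Set Implicit Arguments. Unset Strict Implicit. Unset Printing Implicit Defensive.

(* A directed multigraph: finite node type V, finite arc type E, each arc
   e has a tail [src e] and a head [tgt e]; parallel arcs are distinct
   elements of E with equal endpoints. *)

Section Graph.
Variables (V E : finType) (src tgt : E -> V).

Fixpoint walk (a b : V) (p : seq E) : Prop :=
  match p with
  | [::] => a = b
  | e :: p' => src e = a /\ walk (tgt e) b p'
  end.

Definition reaches (a b : V) : Prop := exists p, walk a b p.

Definition acyclic : Prop := forall a p, walk a a p -> p = [::].

Definition st_dag (s t : V) : Prop :=
  [/\ acyclic,
      (forall v, (forall e, tgt e != v) <-> v = s),
      (forall v, (forall e, src e != v) <-> v = t),
      (forall v, reaches s v) &
      (forall v, reaches v t)].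

Definition sdom (s : V) (ab cd : E) : Prop :=
  ab = cd \/ forall p, walk s (src cd) p -> ab \in p.

Definition tdom (t : V) (ab cd : E) : Prop :=
  ab = cd \/ forall p, walk (tgt cd) t p -> ab \in p.

Definition strict_sdom s ab cd := ab <> cd /\ sdom s ab cd.
Definition strict_tdom t ab cd := ab <> cd /\ tdom t ab cd.

Definition idom_s (s : V) (ab cd : E) : Prop :=
  strict_sdom s ab cd /\ forall b, strict_sdom s b cd -> sdom s b ab.

(* t-dominator trees with abstract root: [None] is the abstract root,
   which t-dominates every arc. *)
Definition tdom_opt (t : V) (o : option E) (cd : E) : Prop :=
  match o with
  | None => True
  | Some ab => tdom t ab cd
  end.

Definition idom_t (t : V) (o : option E) (cd : E) : Prop :=
  match o with
  | None => forall b, ~ strict_tdom t b cd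
  | Some ab => strict_tdom t ab cd /\ forall b, strict_tdom t b cd -> tdom t b ab
  end.

End Graph.

(* Main.v *)
Require Import Defs.
From mathcomp Require Import all_boot.

Section Aux.
Variables (V E : finType) (src tgt : E -> V).

Lemma walk_cat a c b p q : @walk V E src tgt a c p -> walk src tgt c b q ->
  walk src tgt a b (p ++ q).
Proof.
elim: p a => [|e p IH] a /=; first by move=> ->.
by move=> [-> hp] hq; split=> //; apply: IH hp hq.
Qed.

Lemma walk_split a b p e : @walk V E src tgt a b p -> e \in p ->
  exists p1 p2, [/\ p = p1 ++ e :: p2, walk src tgt a (src e) p1
                  & walk src tgt (tgt e) b p2].
Proof.
elim: p a => [|e' p IH] a //= [hs hp].
rewrite in_cons; case: eqP => [-> _|_ /= hin].
  by exists [::], p; split=> //=; rewrite hs.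
have [p1 [p2 [-> h1 h2]]] := IH _ hp hin.
by exists (e' :: p1), p2; split=> //=.
Qed.
End Aux.
Arguments walk_cat {V E src tgt a c b p q}.
Arguments walk_split {V E src tgt a b p e}.

Theorem lemma7 (V E : finType) (src tgt : E -> V) (s t : V)
  (hG : st_dag src tgt s t) (uv xy : E) :
  idom_s src tgt s uv xy ->
  forall o : option E, idom_t src tgt t o uv -> tdom_opt src tgt t o xy.
Proof.
case: hG => hacy _ _ hreach _.
move=> [[neq_uv_xy hsd] himm] [ab|] //= [[neq hab] _].
case: hab => [//|hab].
case: (eqVneq ab xy) => [->|nabxy]; first by left.
right=> P hP.
case: (boolP (ab \in P)) => // nP; exfalso.
case: hsd => [//|hsx].
have hvx : forall Q, walk src tgt (tgt uv) (src xy) Q -> ab \in Q.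
  move=> Q hQ.
  have := hab (Q ++ xy :: P) (walk_cat hQ (conj erefl hP : walk src tgt (src xy) t (xy :: P))).
  by rewrite mem_cat in_cons (negbTE nabxy) (negbTE nP) !orbF.
have sab : strict_sdom src tgt s ab xy.
  rewrite /strict_sdom.
  split; first by apply/eqP.
  rewrite /sdom.
  right=> W hW.
  have [W1 [W2 [-> _ h2]]] := walk_split hW (hsx W hW).
  by rewrite mem_cat in_cons (hvx _ h2) !orbT.
case: (himm ab sab) => [//|hsu].
have [W hW] := hreach (src xy).
have [W1 [Q [_ _ hQ]]] := walk_split hW (hsx W hW).
have [Q1 [Q2 [_ hQ1 _]]] := walk_split hQ (hvx Q hQ).
have [R hR] := hreach (src uv).
have [R1 [R2 [_ _ hR2]]] := walk_split hR (hsu R hR).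
have hc : walk src tgt (src ab) (src ab) (ab :: R2 ++ uv :: Q1).
  split=> //; apply: walk_cat hR2 _; by split.
by have := hacy _ _ hc.
Qed.
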